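(* For each $a\in A\setminus\{a^*\}$ and $\ell\in\mathbb{R}$: (1) $I_{a^*,a}(\ell)-I_{a,a}(\ell)=-\ell$; (2) $I_{a^*,a}(\ell)\ge I_{a^*,a}(\hat L_a(a))$ whenever $\ell\le\hat L_a(a)$.
   Context: Finite action set $A$, $a^*\in A$. A measurable space $Z$ with $\sigma$-finite measure $\nu$; for each $n$ and $a\in A$, a probability measure $\mu^n_a$ on $Z$ with density $g^n_a$ w.r.t. $\nu$. For $a'\neq a^*$, $L_n(a')=\frac1n\log\frac{g^n_{a^*}(z)}{g^n_{a'}(z)}$, well-defined $\mu^n_a$-a.s. for all $a\in A$; $\mathbb{P}_a$ is probability under $\mu^n_a$. For each $a\in A$, $a'\neq a^*$, $I_{a,a'}:\mathbb{R}\to[0,\infty]$ is a rate function: for all measurable $B\subseteq\mathbb{R}$, $-\inf_{\mathrm{int}B}I_{a,a'}\le\liminf_n\frac1n\log\mathbb{P}_a[L_n(a')\in B]\le\limsup_n\frac1n\log\mathbb{P}_a[L_n(a')\in B]\le-\inf_{\mathrm{cl}B}I_{a,a'}$. Each $I_{a,a'}$ has a unique minimizer $\hat L_a(a')$, with $\hat L_a(a')\neq\hat L_{\tilde a}(a')$ for $a\neq\tilde a$, and compact level sets; $I_{a^*,a'}$ is continuous at $\hat L_{a'}(a')$ and $\hat L_{a^*}(a')$. *)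

(* Defs.v *)
From HB Require Import structures.
From mathcomp Require Import all_boot all_order all_algebra.
From mathcomp Require Import all_classical all_reals all_analysis.
Set Implicit Arguments. Unset Strict Implicit. Unset Printing Implicit Defensive.
Import Order.TTheory GRing.Theory Num.Theory.
Import numFieldNormedType.Exports.
Local Open Scope classical_set_scope.
Local Open Scope ring_scope.

Definition LLR (R : realType) (A Z : Type) (g : nat -> A -> Z -> R)
  (astar a' : A) (n : nat) (z : Z) : R :=
  (n%:R)^-1 * ln (g n astar z / g n a' z).

Definition LDP_bounds (R : realType) (P : nat -> set R -> \bar R)
  (I : R -> \bar R) : Prop :=
  forall B : set R, measurable B ->
    let s := fun n : nat => (((n%:R)^-1)%:E * lne (P n B))%E in
    [/\ (- ereal_inf (I @` interior B) <= limn_einf s)%E,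
        (limn_einf s <= limn_esup s)%E &
        (limn_esup s <= - ereal_inf (I @` closure B))%E].

Definition rate_function (R : realType) (P : nat -> set R -> \bar R)
  (I : R -> \bar R) : Prop :=
  (forall x, (0 <= I x)%E) /\ LDP_bounds P I.

Definition unique_minimizer (R : realType) (I : R -> \bar R) (x : R) : Prop :=
  (forall y, (I x <= I y)%E) /\
  (forall x', (forall y, (I x' <= I y)%E) -> x' = x).

Definition compact_level_sets (R : realType) (I : R -> \bar R) : Prop :=
  forall alpha : R, compact [set x | (I x <= alpha%:E)%E].

(* Main.v *)
Require Import Defs.
From HB Require Import structures.
From mathcomp Require Import all_boot all_order all_algebra.
From mathcomp Require Import all_classical all_reals all_analysis.
From mathcomp Require Import lra measurable_realfun.
Import Order.TTheory GRing.Theory Num.Theory.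
Import numFieldNormedType.Exports.
Local Open Scope classical_set_scope.
Local Open Scope ring_scope.

Section Gen.
Context (R : realType).
Local Open Scope ereal_scope.
Lemma limn_esup_le_ev (u v : (\bar R)^nat) :
  (forall n, (0 < n)%N -> u n <= v n) -> limn_esup u <= limn_esup v.
Proof.
move=> uv; rewrite !limn_esup_lim; apply: lee_lim; [exact: is_cvg_esups|exact: is_cvg_esups|].
near=> n; apply: ge_ereal_sup => _ [k /= nk <-].
apply: le_trans (uv k _) _; first by apply: leq_trans nk; near: n; exists 1%N.
by apply: ereal_sup_ubound; exists k.
Unshelve. all: by end_near. Qed.

Lemma limn_esup_shift (u : (\bar R)^nat) (c : R) :
  limn_esup (fun n => c%:E + u n) = c%:E + limn_esup u.
Proof.
have E : forall v : (\bar R)^nat, limn_esup v = - limn_einf (fun n => - v n).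
  by move=> v; rewrite /limn_einf oppeK; congr limn_esup; apply/funext => n; rewrite oppeK.
rewrite E (E u).
have -> : (fun n => - (c%:E + u n)) = (fun n => (- c)%:E + - u n).
  by apply/funext => n; rewrite oppeD.
by rewrite limn_einf_shift // oppeD // EFinN oppeK.
Qed.

Lemma step_lne (P1 P2 : \bar R) (n : nat) (c : R) : (0 < n)%N -> 0 <= P1 -> 0 <= P2 ->
  P2 \is a fin_num -> P1 <= (expR (n%:R * c))%:E * P2 ->
  (n%:R^-1)%:E * lne P1 <= c%:E + (n%:R^-1)%:E * lne P2.
Proof.
move=> n0 P10 P20 P2f H.
have ni : (0 < n%:R^-1 :> R)%R by rewrite invr_gt0 ltr0n.
move: P2 P2f P20 H => [p| |]// _; rewrite lee_fin => p0 H.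
move: P1 P10 H => [q| |] //; rewrite ?lee_fin => q0 H.
have [q00|qpos] := eqVneq q 0%R.
  by by rewrite q00 le0_lneNy // mulrNy gtr0_sg // mul1e leNye.
have qp : (0 < q)%R by rewrite lt_def qpos q0.

have pp : (0 < p)%R.
  rewrite lt_def p0 andbT; apply/eqP => p00; move: H; rewrite p00 mulr0 => H.
  by move: qp; rewrite ltNge H.
rewrite !lne_EFin // -!EFinM -EFinD lee_fin.
have : (ln q <= n%:R * c + ln p :> R)%R.
  by rewrite -(expRK (n%:R * c)%R) -lnM ?posrE ?expR_gt0 // ler_ln ?posrE ?mulr_gt0 ?expR_gt0.
move=> Hl.
have nn : (n%:R != 0 :> R)%R by rewrite pnatr_eq0 -lt0n.
rewrite -(@ler_pM2l _ (n%:R)%R) ?ltr0n // mulrDr !mulrA divff // !mul1r.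
by [].
Qed.

Lemma ldp_compare (P1 P2 : nat -> set R -> \bar R) (J1 J2 : R -> \bar R) (l k : R) :
  (forall x, 0 <= J1 x) ->
  LDP_bounds P1 J1 -> LDP_bounds P2 J2 -> compact_level_sets J2 ->
  (forall n B, measurable B -> 0 <= P1 n B) ->
  (forall n B, measurable B -> 0 <= P2 n B /\ P2 n B \is a fin_num) ->
  (forall d, (0 < d)%R -> forall n, (0 < n)%N ->
     P1 n (ball l d) <= (expR (n%:R * (k + d)))%:E * P2 n (ball l d)) ->
  J2 l <= J1 l + k%:E.
Proof.
move=> J10 H1 H2 Hc P10 P2f Hch.
have key : forall d, (0 < d)%R ->
    - J1 l <= (k + d)%:E - ereal_inf (J2 @` closure (ball l d)).
  move=> d d0.
  have mB : measurable (ball l d) := measurable_realfun.open_measurable (ball_open l d).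
  have /= [L1 _ _] := H1 _ mB; have /= [_ _ U2] := H2 _ mB.
  have A : - J1 l <= - ereal_inf (J1 @` interior (ball l d)).
    rewrite leeN2; apply: ereal_inf_lbound; exists l => //.
    by rewrite ((interior_id (ball l d)).1 (ball_open l d)); exact: ballxx.
  apply: (le_trans A); apply: (le_trans L1); apply: (le_trans (limn_einf_sup _)).
  apply: (le_trans _ (leeD2l ((k + d)%:E) U2)).
  rewrite -limn_esup_shift; apply: limn_esup_le_ev => n n0.
  have [P20 P2fin] := P2f n _ mB.
  exact: step_lne n0 (P10 n _ mB) P20 P2fin (Hch d d0 n n0).
rewrite leNgt; apply/negP => Hlt.
move: Hlt (key) (J10 l); case: (J1 l) => [j| |] //; last first.
  by rewrite addye // ltNge leey.
move=> Hlt key' _.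
have [alpha [ja aJ]] : exists alpha : R, (j + k < alpha)%R /\ alpha%:E < J2 l.
  move: Hlt; case: (J2 l) => [y| |] //.
  - rewrite -EFinD lte_fin => jy; exists ((j + k + y) / 2)%R; split.
      by rewrite ltr_pdivlMr // mulrDr mulr1 ltrD2l.
    by rewrite lte_fin ltr_pdivrMr // mulrDr mulr1 ltrD2r.
  - by move=> _; exists (j + k + 1)%R; split; [rewrite ltrDl|rewrite ltey].
have cl : closed [set x | J2 x <= alpha%:E].
  exact: compact_closed (@norm_hausdorff _ _) (Hc alpha).
have : nbhs l (~` [set x | J2 x <= alpha%:E]).
  apply: open_nbhs_nbhs; split; first exact: closed_openC.
  by move=> /= H; move: aJ; rewrite ltNge H.
move=> /nbhs_ballP [r r0 rsub].
pose eps := (alpha - (j + k))%R.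
have e0 : (0 < eps)%R by rewrite subr_gt0.
pose m := Num.min r eps.
have m0 : (0 < m)%R by rewrite lt_min r0 e0.
have := key' (m / 2)%R (divr_gt0 m0 (ltr0Sn _ 1)).
have ainf : alpha%:E <= ereal_inf (J2 @` closure (ball l (m / 2)%R)).
  apply: le_ereal_inf_tmp => _ [x xc <-].
  have xb : ball l r x.
    have mr : (m <= r)%R by rewrite /m ge_min lexx.
    apply: (le_ball mr); have := @subset_closure_half R R l m m0 x; apply; exact: xc.
  by have := rsub x xb; rewrite /= => /negP; rewrite -ltNge => /ltW.
move=> H; have : (- j)%:E <= (k + m / 2)%:E - alpha%:E.
  apply: (le_trans H); apply: leeD2l; rewrite leeN2; exact: ainf.
rewrite -EFinB lee_fin => Hj.
have me : (m <= eps)%R by rewrite /m ge_min lexx orbT.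
move: Hj; rewrite /eps in me e0 *; lra.
Qed.
End Gen.

Theorem lemma4 (R : realType) (A : finType) (astar : A)
  (d : measure_display) (Z : measurableType d)
  (nu : {measure set Z -> \bar R}) (nu_sf : sigma_finite setT nu)
  (mu : nat -> A -> probability Z R) (g : nat -> A -> Z -> R)
  (g_meas : forall n a, measurable_fun setT (g n a))
  (g_ge0 : forall n a z, 0 <= g n a z)
  (g_dens : forall n a (E : set Z), measurable E ->
     mu n a E = (\int[nu]_(z in E) (g n a z)%:E)%E)
  (L_wd : forall n a a', a' != astar ->
     {ae mu n a, forall z, 0 < g n astar z /\ 0 < g n a' z})
  (I : A -> A -> R -> \bar R) (Lhat : A -> A -> R)
  (I_rate : forall a a', a' != astar ->
     rate_function (fun n B => mu n a (LLR g astar a' n @^-1` B)) (I a a'))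
  (I_min : forall a a', a' != astar -> unique_minimizer (I a a') (Lhat a a'))
  (Lhat_dist : forall a a' a2, a' != astar -> a != a2 ->
     Lhat a a' != Lhat a2 a')
  (I_cpt : forall a a', a' != astar -> compact_level_sets (I a a'))
  (I_cont1 : forall a', a' != astar ->
     {for Lhat a' a', continuous (I astar a')})
  (I_cont2 : forall a', a' != astar ->
     {for Lhat astar a', continuous (I astar a')}) :
  forall a, a != astar -> forall l : R,
    I astar a l = (I a a l - l%:E)%E /\
    (l <= Lhat a a -> (I astar a (Lhat a a) <= I astar a l)%E).
Proof.
move=> a na.
set X := LLR g astar a.
have mpos : forall n b, measurable [set z | (0 < g n b z)%R].
  move=> n b; have := g_meas n b measurableT _ (measurable_itv `]0%R, +oo[).
  rewrite setTI; congr measurable; apply/seteqP; split => z /=; rewrite in_itv /= andbT //.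
pose S n := [set z | (0 < g n astar z)%R] `&` [set z | (0 < g n a z)%R].
have mS : forall n, measurable (S n) by move=> n; apply: measurableI.
have XE : forall n, X n = fun z => (n%:R^-1 * (\1_(S n) z * (ln (g n astar z) - ln (g n a z))))%R.
  move=> n; apply/funext => z; rewrite /X /LLR indicE; congr (_ * _)%R.
  have [zS|zS] := boolP (z \in S n).
    move: zS; rewrite inE => -[p1 p2].
    by rewrite mul1r lnM ?posrE ?invr_gt0 // lnV ?posrE.
  rewrite mul0r; apply: ln0.
  have : ~ (S n z) by move=> h; apply: (negP zS); rewrite inE.
  move=> /not_andP [] /negP; rewrite -leNgt => H.
    by rewrite mulr_le0_ge0 // invr_ge0.
  have -> : g n a z = 0%R by apply/eqP; rewrite eq_le H g_ge0.
  by rewrite invr0 mulr0.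
have mX : forall n, measurable_fun setT (X n).
  move=> n; rewrite XE; apply: measurable_funM; first exact: measurable_cst.
  apply: measurable_funM; first exact: measurable_indic.
  apply: measurable_funB; apply: measurableT_comp => //; exact: measurable_ln.
have mpre : forall n (B : set R), measurable B -> measurable (X n @^-1` B).
  by move=> n B mB; have := mX n measurableT _ mB; rewrite setTI.
have null : forall n b, mu n b (~` S n) = 0%E.
  move=> n b; have [N' [mN' N'0 sub]] := L_wd n b a na.
  apply/eqP; rewrite eq_le measure_ge0 andbT -N'0; apply: le_measure; rewrite ?inE //.
    exact/measurableC/mS.
have change : forall n u v (c : R) (E : set Z), measurable E ->
    (forall z, E z -> S n z -> (g n u z <= expR c * g n v z)%R) ->
    (mu n u E <= (expR c)%:E * mu n v E)%E.
  move=> n u v c E mE H.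
  have mN : measurable (~` S n) by exact/measurableC/mS.
  have z0 : forall b, mu n b (E `&` ~` S n) = 0%E.
    move=> b; apply/eqP; rewrite eq_le measure_ge0 andbT -(null n b).
    by apply: le_measure; [rewrite inE; exact: measurableI|rewrite inE|exact: subIsetr].
  have eqD : forall b, mu n b E = mu n b (E `\` ~` S n).
    move=> b; apply: (eq_trans (measureDI _ mE mN)).
    by rewrite [Y in (_ + Y)%E](_ : _ = 0%E) ?adde0 //; apply: z0.
  rewrite (eqD u) (eqD v).
  have mED : measurable (E `\` ~` S n) by exact: measurableD.
  rewrite !g_dens // -ge0_integralZl_EFin ?expR_ge0 //; last first.
    by apply/measurable_EFinP; exact: measurable_funTS.
    by move=> z _; rewrite lee_fin g_ge0.
  apply: ge0_le_integral => //.
  - by move=> z _; rewrite lee_fin g_ge0.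
  - by apply/measurable_EFinP; exact: measurable_funTS.
  - apply/measurable_EFinP; apply: measurable_funM; first exact: measurable_cst.
    exact: measurable_funTS.
  - move=> z [Ez] /=; rewrite /S /= => /contrapT Sz.
    by rewrite -EFinM lee_fin; apply: H.
have ptw : forall n z, (0 < n)%N -> S n z ->
    g n astar z = (expR (n%:R * X n z) * g n a z)%R.
  move=> n z n0 [p1 p2]; rewrite /X /LLR mulrA divff ?pnatr_eq0 -?lt0n // mul1r.
  by rewrite lnK ?posrE ?divr_gt0 // mulrVK // unitfE gt_eqF.
have hP : forall b n (B : set R), measurable B ->
    (0 <= mu n b (X n @^-1` B))%E /\ mu n b (X n @^-1` B) \is a fin_num.
  move=> b n B mB; split; first exact: measure_ge0.
  exact: fin_num_measure (mpre n B mB).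
have part1 : forall l, I astar a l = (I a a l - l%:E)%E.
  move=> l.
  have [I1ge0 LD1] := I_rate astar a na; have [I2ge0 LD2] := I_rate a a na.
  have bb : forall dd x, ball l dd x -> (l - dd < x < l + dd)%R.
    by move=> dd x; rewrite -ball_normE /= ltr_distlC.
  have mball : forall dd, measurable (ball l dd) by move=> dd; exact: open_measurable (ball_open l dd).
  have G1 : (I a a l <= I astar a l + l%:E)%E.
    apply: (@ldp_compare _ _ _ _ _ l l I1ge0 LD1 LD2 (I_cpt a a na)).
    - by move=> n B mB; exact: (hP astar n B mB).1.
    - by move=> n B mB; exact: hP.
    - move=> dd d0 n n0; apply: change; first exact: mpre.
      move=> z /bb /andP [_ hz] Sz; rewrite (ptw n z n0 Sz) ler_wpM2r ?g_ge0 // ler_expR.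
      by rewrite ler_wpM2l // ltW.
  have G2 : (I astar a l <= I a a l + (- l)%:E)%E.
    apply: (@ldp_compare _ _ _ _ _ l (- l)%R I2ge0 LD2 LD1 (I_cpt astar a na)).
    - by move=> n B mB; exact: (hP a n B mB).1.
    - by move=> n B mB; exact: hP.
    - move=> dd d0 n n0; apply: change; first exact: mpre.
      move=> z /bb /andP [hz _] Sz; rewrite (ptw n z n0 Sz) mulrA -expRD.
      apply: ler_peMl; first exact: g_ge0.
      rewrite -expR0 ler_expR -mulrDr mulr_ge0 //.
      by rewrite /X; move: hz; lra.
  move: G1 G2 (I1ge0 l) (I2ge0 l).
  case: (I astar a l) => [x| |]; case: (I a a l) => [y| |] //=.
  - rewrite -!EFinD !lee_fin => h1 h2 _ _; congr EFin; lra.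
move=> l; split; first exact: part1.
move=> hl; rewrite !part1; apply: leeD.
  exact: (I_min a a na).1.
by rewrite lee_fin lerN2.
Qed.
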